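(* For $n \geq 3$, the collapsibility number of $\mathcal{VR}(\mathbb{I}_n;2)$ is $4$.
   Context: For $n\ge 1$, $\mathbb{I}_n$ is the $n$-dimensional hypercube graph: vertex set $\{0,1\}^n$, two vertices adjacent iff they differ in exactly one coordinate; it is a metric space with the shortest-path (Hamming) distance $d(v,w)=\#\{i: v(i)\ne w(i)\}$. For a metric space $(X,d)$ and $r\ge0$, $\mathcal{VR}(X;r)$ is the simplicial complex on vertex set $X$ whose simplices are the finite subsets of diameter at most $r$. For a finite simplicial complex $\Delta$: if $\gamma\in\Delta$ with $|\gamma|\le d$ is contained in a unique maximal simplex $\sigma$ of $\Delta$, the elementary $d$-collapse removes all simplices $\tau$ with $\gamma\subseteq\tau\subseteq\sigma$. $\Delta$ is $d$-collapsible if a sequence of elementary $d$-collapses reduces $\Delta$ to the void complex $\emptyset$. The collapsibility number of $\Delta$ is the minimal $d$ such that $\Delta$ is $d$-collapsible. *)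

(* Defs.v *)
From mathcomp Require Import all_boot.
Set Implicit Arguments. Unset Strict Implicit. Unset Printing Implicit Defensive.

Definition cube (n : nat) := {ffun 'I_n -> bool}.

Definition hamming n (v w : cube n) : nat := #|[set i | v i != w i]|.

(* Vietoris-Rips complex VR(I_n; r): all (finite) subsets of diameter <= r.
   A simplicial complex is represented by its set of faces, the empty face
   included (so the void complex is set0). *)
Definition VR n (r : nat) : {set {set cube n}} :=
  [set s : {set cube n} | [forall v in s, forall w in s, hamming v w <= r]].

Section Collapse.
Variable V : finType.
Implicit Types (K : {set {set V}}) (g s : {set V}).

Definition maxface K s : Prop :=
  s \in K /\ forall t, t \in K -> s \subset t -> t = s.

Definition collapse_step (d : nat) K K' : Prop :=
  exists g s, [/\ g \in K, #|g| <= d, maxface K s, g \subset s &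
    (forall s', maxface K s' -> g \subset s' -> s' = s)] /\
    K' = [set t in K | ~~ ((g \subset t) && (t \subset s))].

Inductive d_collapsible (d : nat) : {set {set V}} -> Prop :=
| dcoll_void : d_collapsible d set0
| dcoll_step K K' : collapse_step d K K' -> d_collapsible d K' -> d_collapsible d K.

Definition collapsibility_number_is K (c : nat) : Prop :=
  d_collapsible c K /\ forall d, d < c -> ~ d_collapsible d K.
End Collapse.

(* Main.v *)
Require Import Defs.
From mathcomp Require Import all_boot.
Set Implicit Arguments. Unset Strict Implicit. Unset Printing Implicit Defensive.

Lemma bf_flip (a1 a2 a3 b1 b2 b3 : bool) :
  (a1 (+) a2 == b1 (+) b2) -> (a1 (+) a3 == b1 (+) b3) ->
  (a1 != b1) + ((a2 != b2) + ((a3 != b3) + 0)) <= 2 -> [/\ a1 = b1, a2 = b2 & a3 = b3].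
Proof. by case: a1; case: a2; case: a3; case: b1; case: b2; case: b3. Qed.

Lemma bf_two (y1 y2 y3 a1 a2 a3 aj bj yj zj : bool) : aj != bj ->
  (y1 != a1) + ((y2 != a2) + ((y3 != a3) + ((yj != aj) + 0))) <= 2 ->
  (~~ y1 != a1) + ((~~ y2 != a2) + ((~~ y3 != a3) + ((zj != aj) + 0))) <= 2 ->
  (y1 != a1) + ((y2 != a2) + ((y3 != a3) + ((yj != bj) + 0))) <= 2 ->
  (~~ y1 != a1) + ((~~ y2 != a2) + ((~~ y3 != a3) + ((zj != bj) + 0))) <= 2 -> False.
Proof.
by case: y1; case: y2; case: y3; case: a1; case: a2; case: a3; case: aj; case: bj; case: yj; case: zj.
Qed.

Lemma bf_cls (y1 y2 y3 a1 a2 a3 : bool) :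
  (a1 (+) a2 == y1 (+) y2) -> (a1 (+) a3 == y1 (+) y3) ->
  (y1 != a1) + ((y2 != a2) + ((y3 != a3) + 0)) <= 2 ->
  (~~ y1 != a1) + ((~~ y2 != a2) + ((~~ y3 != a3) + 0)) <= 2 -> False.
Proof. by case: y1; case: y2; case: y3; case: a1; case: a2; case: a3. Qed.

Lemma bf_pig (p0 r0 p1 r1 p2 r2 p3 r3 p4 r4 : bool) :
  (p1, r1) != (p0, r0) -> (p2, r2) != (p0, r0) -> (p3, r3) != (p0, r0) -> (p4, r4) != (p0, r0) ->
  (p1, r1) != (p2, r2) -> (p1, r1) != (p3, r3) -> (p1, r1) != (p4, r4) ->
  (p2, r2) != (p3, r3) -> (p2, r2) != (p4, r4) -> (p3, r3) != (p4, r4) -> False.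
Proof.
by case: p0; case: r0; case: p1; case: r1; case: p2; case: r2; case: p3; case: r3; case: p4; case: r4.
Qed.


Section Gen.
Variable V : finType.
Implicit Types (K L D : {set {set V}}) (g s t u : {set V}).

Definition cone (v : V) L := [set t : {set V} | (v \in t) && (t :\ v \in L)].

Lemma coll_simplex d s : d_collapsible d [set t : {set V} | t \subset s].
Proof.
apply: (@dcoll_step _ d _ set0); last exact: dcoll_void.
exists set0, s; split; last first.
  by apply/setP => t; rewrite !inE sub0set andbC; case: (t \subset s).
split.
- by rewrite inE sub0set.
- by rewrite cards0.
- split; first by rewrite inE.
  by move=> t; rewrite inE => ts st; apply/eqP; rewrite eqEsubset ts st.
- exact: sub0set.
- move=> sp [Hs Hm] _; symmetry; apply: Hm; first by rewrite inE.
  by move: Hs; rewrite inE.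
Qed.

Lemma link_lemma d (v : V) D L :
  d_collapsible d L -> (forall t, t \in L -> v \notin t) ->
  (forall t, t \in D -> v \notin t) -> d_collapsible d.+1 D ->
  d_collapsible d.+1 (D :|: cone v L).
Proof.
move=> HL; elim: HL => [|L0 L1 Hstep HL1 IH] HLv HDv HD.
  have -> : D :|: cone v set0 = D.
    by apply/setP => t; rewrite !inE andbF orbF.
  by [].
case: Hstep => g [s [[gL gd [sL smax] gs guniq] HL1def]]; subst L1.
have vg : v \notin g by apply: HLv.
have vs : v \notin s by apply: HLv.
have inK : forall t, (t \in D :|: cone v L0) = (t \in D) || ((v \in t) && (t :\ v \in L0)).
  by move=> t; rewrite !inE.
have vK : forall t, t \in D :|: cone v L0 -> v \in t -> t :\ v \in L0.
  move=> t; rewrite inK => /orP [/HDv /negP //|/andP [] //].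
apply: (@dcoll_step _ _ _ (D :|: cone v [set t in L0 | ~~ ((g \subset t) && (t \subset s))])); last first.
  apply: IH => //.
  by move=> t; rewrite inE => /andP [/HLv].
exists (v |: g), (v |: s); split; last first.
  apply/setP => t; rewrite !inE.
  case vt: (v \in t) => /=.
    have -> : (t \in D) = false by apply/negP => /HDv; rewrite vt.
    rewrite /= subUset sub1set vt /=.
    have -> : (g \subset t) = (g \subset t :\ v) by rewrite subsetD1 vg andbT.
    have -> : (t \subset v |: s) = (t :\ v \subset s) by rewrite subDset.
    by rewrite andbC.
  by rewrite subUset sub1set vt /=; case: (t \in D).
split.
- by rewrite !inE eqxx /= setU1K ?gL ?orbT.
- by rewrite cardsU1 vg ltnS.
- split; first by rewrite !inE eqxx /= setU1K ?sL ?orbT.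
  move=> t tK st.
  have vt : v \in t by apply: (subsetP st); rewrite setU11.
  have tvL := vK t tK vt.
  have : s \subset t :\ v by rewrite subsetD1 vs andbT; apply: subset_trans st; exact: subsetUr.
  move/(smax _ tvL) => <-.
  by rewrite setD1K.
- by rewrite setUS.
- move=> s2 [s2K s2m] gs2.
  have vs2 : v \in s2 by apply: (subsetP gs2); rewrite setU11.
  have uL := vK s2 s2K vs2.
  have umax : maxface L0 (s2 :\ v).
    split => // u2 u2L su2.
    have vu2 : v \notin u2 by apply: HLv.
    have : v |: u2 = s2.
      apply: s2m; first by rewrite !inE eqxx /= setU1K ?u2L ?orbT.
      by rewrite -{1}(setD1K vs2) setUS.
    by move=> <-; rewrite setU1K.
  have gu : g \subset s2 :\ v by rewrite subsetD1 vg andbT; apply: subset_trans gs2; exact: subsetUr.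
  by rewrite -(guniq _ umax gu) setD1K.
Qed.
End Gen.


Section Cube.
Variable n : nat.
Implicit Types (v w y z q : cube n).

Lemma hamming_sum v w : hamming v w = \sum_i (v i != w i).
Proof.
rewrite /hamming -sum1_card big_mkcond /=.
by apply: eq_bigr => i _; rewrite inE; case: (v i != w i).
Qed.

Lemma hammingC v w : hamming v w = hamming w v.
Proof. by rewrite !hamming_sum; apply: eq_bigr => i _; rewrite eq_sym. Qed.

Lemma hamming0 v : hamming v v = 0.
Proof. by rewrite hamming_sum big1 // => i _; rewrite eqxx. Qed.

Lemma ham_ge v w (l : seq 'I_n) : uniq l -> \sum_(i <- l) (v i != w i) <= hamming v w.
Proof.
move=> ul; rewrite hamming_sum big_uniq // [X in _ <= X](bigID (mem l)) /=.
exact: leq_addr.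
Qed.

Lemma ham_eq0 v w : hamming v w = 0 -> v = w.
Proof.
move/cards0_eq => H; apply/ffunP => i; apply/eqP; apply/negPn/negP => Hi.
have : i \in [set i | v i != w i] by rewrite inE.
by rewrite H inE.
Qed.
End Cube.


Section P0.
Variable n : nat.
Implicit Types (v w y z q : cube n).

Lemma three_elems (A : {set 'I_n}) : 3 <= #|A| ->
  exists i1 i2 i3, uniq [:: i1; i2; i3] /\ [/\ i1 \in A, i2 \in A & i3 \in A].
Proof.
rewrite cardE; have := enum_uniq A; have mA := mem_enum A.
case: (enum A) mA => [|a1 [|a2 [|a3 s]]] //= mA.
move=> uA _; exists a1, a2, a3; split.
  by move: uA; rewrite /= !inE !negb_or => /and4P [/and3P [-> -> _] /andP [-> _] _ _].
by rewrite -!mA !inE !eqxx !orbT.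
Qed.

Lemma bneq (a b : bool) : a != b -> b = ~~ a.
Proof. by case: a; case: b. Qed.

Lemma P0 q1 q2 q3 q4 y z : uniq [:: q1; q2; q3; q4] ->
  (forall a b, a \in [:: q1; q2; q3; q4] -> b \in [:: q1; q2; q3; q4] -> hamming a b <= 2) ->
  (forall q, q \in [:: q1; q2; q3; q4] -> hamming y q <= 2 /\ hamming z q <= 2) ->
  hamming y z <= 2.
Proof.
move=> uQ HQ Hyz; rewrite leqNgt; apply/negP => H3.
have [i1 [i2 [i3 [ui [Hi1 Hi2 Hi3]]]]] := three_elems H3.
rewrite !inE in Hi1 Hi2 Hi3.
have z1 := bneq Hi1; have z2 := bneq Hi2; have z3 := bneq Hi3.
have B3 : forall v w, (v i1 != w i1) + ((v i2 != w i2) + ((v i3 != w i3) + 0)) <= hamming v w.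
  by move=> v w; have := ham_ge v w ui; rewrite !big_cons big_nil.
pose cls q := (q i1 (+) q i2, q i1 (+) q i3).
have Hc : forall q, q \in [:: q1; q2; q3; q4] -> cls q != cls y.
  move=> q qQ; have [Hy Hz] := Hyz q qQ; apply/negP; rewrite /cls xpair_eqE => /andP [e1 e2].
  apply: (bf_cls e1 e2).
    exact: leq_trans (B3 y q) Hy.
  by rewrite -z1 -z2 -z3; exact: leq_trans (B3 z q) Hz.
have Hp : forall q q', q \in [:: q1; q2; q3; q4] -> q' \in [:: q1; q2; q3; q4] -> q != q' -> cls q != cls q'.
  move=> q q' qQ q'Q nqq; apply/negP; rewrite /cls xpair_eqE => /andP [e1 e2].
  have [f1 f2 f3] := bf_flip e1 e2 (leq_trans (B3 q q') (HQ q q' qQ q'Q)).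
  have [j Hj] : exists j, q j != q' j.
    case: (pickP (fun j => q j != q' j)) => [j Hj|H]; first by exists j.
    have E : q = q' by apply/ffunP => i; apply/eqP; apply/negbFE; exact: H i.
    by rewrite E eqxx in nqq.
  have uj : uniq [:: i1; i2; i3; j].
    rewrite /= !inE !negb_or; move: ui; rewrite /= !inE !negb_or => /and3P [/andP [-> ->] -> _] /=.
    by rewrite !andbT; apply/and3P; split; apply/negP => /eqP E; move: Hj; rewrite -E ?f1 ?f2 ?f3 eqxx.
  have B4 : forall v w, (v i1 != w i1) + ((v i2 != w i2) + ((v i3 != w i3) + ((v j != w j) + 0))) <= hamming v w.
    by move=> v w; have := ham_ge v w uj; rewrite !big_cons big_nil.
  have [Hy Hz] := Hyz q qQ; have [Hy' Hz'] := Hyz q' q'Q.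
  apply: (@bf_two (y i1) (y i2) (y i3) (q i1) (q i2) (q i3) (q j) (q' j) (y j) (z j) Hj).
  - exact: leq_trans (B4 y q) Hy.
  - by rewrite -z1 -z2 -z3; exact: leq_trans (B4 z q) Hz.
  - by rewrite f1 f2 f3; exact: leq_trans (B4 y q') Hy'.
  - by rewrite -z1 -z2 -z3 f1 f2 f3; exact: leq_trans (B4 z q') Hz'.
move: uQ; rewrite /= !inE !negb_or => /andP [/and3P [n12 n13 n14] /andP [/andP [n23 n24] /andP [n34 _]]].
have m1 : q1 \in [:: q1; q2; q3; q4] by rewrite !inE eqxx.
have m2 : q2 \in [:: q1; q2; q3; q4] by rewrite !inE eqxx !orbT.
have m3 : q3 \in [:: q1; q2; q3; q4] by rewrite !inE eqxx !orbT.
have m4 : q4 \in [:: q1; q2; q3; q4] by rewrite !inE eqxx !orbT.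
exact: (bf_pig (Hc _ m1) (Hc _ m2) (Hc _ m3) (Hc _ m4) (Hp _ _ m1 m2 n12) (Hp _ _ m1 m3 n13)
  (Hp _ _ m1 m4 n14) (Hp _ _ m2 m3 n23) (Hp _ _ m2 m4 n24) (Hp _ _ m3 m4 n34)).
Qed.
End P0.


Section Up.
Variable n : nat.
Implicit Types (v w y z q : cube n) (S : {set cube n}) (t : {set cube n}).
Definition VR2 : {set {set cube n}} := locked (VR n 2).

Lemma VRP t : reflect (forall a b, a \in t -> b \in t -> hamming a b <= 2) (t \in VR2).
Proof.
rewrite /VR2 -lock inE; apply: (iffP forallP) => [H a b ain bin | H a].
  by move/implyP: (H a) => /(_ ain) /forallP /(_ b) /implyP /(_ bin).
apply/implyP => ain; apply/forallP => b; apply/implyP => bin; exact: H.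
Qed.

Definition adj w v := (w != v) && (hamming w v <= 2).
Definition KS S := [set t : {set cube n} | (t \subset S) && (t \in VR2)].
Definition Nb v := [set w | adj w v].

Lemma KS_clique S : S \in VR2 -> KS S = [set t : {set cube n} | t \subset S].
Proof.
move/VRP => HS; apply/setP => t; rewrite !inE; case tS: (t \subset S) => //=.
apply/VRP => a b ain bin; apply: HS; exact: (subsetP tS).
Qed.

Lemma KS_decomp S v : v \in S -> KS S = KS (S :\ v) :|: cone v (KS (S :&: Nb v)).
Proof.
move=> vS; apply/setP => t; rewrite !inE.
case vt: (v \in t) => /=.
- rewrite subsetD1 vt andbF /=.
  apply/andP/andP => [[tS /VRP tV]|[tS /VRP tV]]; split.
  + apply/subsetP => w; rewrite !inE => /andP [wv wt].
    rewrite (subsetP tS _ wt) /adj wv /=; exact: tV.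
  + by apply/VRP => a b /setD1P [_ ain] /setD1P [_ bin]; apply: tV.
  + rewrite -(setD1K vt); apply/subsetP => w; rewrite !inE => /orP [/eqP -> //|/andP [wv wt]].
    by move: (subsetP tS w); rewrite !inE wt wv => /(_ isT) /andP [].
  + rewrite -(setD1K vt); apply/VRP => a b.
    have key : forall a, a \in t :\ v -> hamming a v <= 2.
      by move=> c ct; move: (subsetP tS c ct); rewrite !inE => /andP [_ /andP [_ ->]].
    rewrite !inE => /orP [/eqP ->|ain] /orP [/eqP ->|bin].
    * by rewrite hamming0.
    * by rewrite hammingC; apply: key; rewrite !inE.
    * by apply: key; rewrite !inE.
    * by apply: tV; rewrite !inE.
- rewrite subsetD1 vt andbT orbF; done.
Qed.

Lemma notin_KSD S v t : t \in KS (S :\ v) -> v \notin t.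
Proof.
rewrite inE => /andP [tS _]; apply/negP => vt; move: (subsetP tS v vt); by rewrite !inE eqxx.
Qed.

Lemma notin_KSN S v t : t \in KS (S :&: Nb v) -> v \notin t.
Proof.
rewrite inE => /andP [tS _]; apply/negP => vt; move: (subsetP tS v vt); by rewrite !inE /adj eqxx andbF.
Qed.

Lemma H_lemma d : forall (Q : seq (cube n)) S, size Q + d = 4 -> uniq Q ->
  (forall a b, a \in Q -> b \in Q -> hamming a b <= 2) ->
  (forall w q, w \in S -> q \in Q -> adj w q) -> d_collapsible d (KS S).
Proof.
elim: d => [|d IHd] Q S.
  rewrite addn0; case: Q => [|q1 [|q2 [|q3 [|q4 []]]]] // _ uQ HQ HS.
  rewrite KS_clique; first exact: coll_simplex.
  apply/VRP => a b aS bS; case: (eqVneq a b) => [->|ab]; first by rewrite hamming0.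
  apply: (P0 uQ HQ) => q qQ.
  by move: (HS a q aS qQ) (HS b q bS qQ) => /andP [_ ->] /andP [_ ->].
move=> HQs uQ HQ.
elim: {S}#|S| {-2}S (leqnn #|S|) => [|m IHm] S Sm HS.
  move: Sm; rewrite leqn0 => /eqP /cards0_eq ->.
  rewrite KS_clique; first exact: coll_simplex.
  by apply/VRP => a b; rewrite inE.
case: (set_0Vmem S) => [->|[v vS]].
  rewrite KS_clique; first exact: coll_simplex.
  by apply/VRP => a b; rewrite inE.
rewrite (KS_decomp vS); apply: link_lemma.
- apply: (IHd (v :: Q)).
  + by rewrite /= addSnnS.
  + rewrite /= uQ andbT; apply/negP => vQ; by move: (HS v v vS vQ); rewrite /adj eqxx.
  + move=> a b; rewrite !inE => /orP [/eqP ->|aQ] /orP [/eqP ->|bQ].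
    * by rewrite hamming0.
    * by move: (HS v b vS bQ) => /andP [].
    * by rewrite hammingC; move: (HS v a vS aQ) => /andP [].
    * by apply: HQ.
  + move=> w q; rewrite !inE => /andP [wS wv] /orP [/eqP ->//|qQ].
    by apply: HS.
- exact: notin_KSN.
- exact: notin_KSD.
- apply: IHm.
    by move: Sm; rewrite (cardsD1 v S) vS add1n ltnS.
  by move=> w q; rewrite inE => /andP [_ wS]; apply: HS.
Qed.

Lemma upper : d_collapsible 4 (VR n 2).
Proof.
have -> : VR n 2 = KS setT by apply/setP => t; rewrite /KS [in RHS]inE subsetT /VR2 -lock.
by apply: (H_lemma (Q := [::])).
Qed.
End Up.


Lemma exists_maxface (V : finType) (K : {set {set V}}) t : t \in K ->
  exists s, maxface K s /\ t \subset s.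
Proof.
move=> tK.
have P0 : (t \in K) && (t \subset t) by rewrite tK subxx.
case: (@arg_maxnP _ t (fun s : {set V} => (s \in K) && (t \subset s)) (fun s : {set V} => #|s|) P0) => s /andP [sK ts] smax.
exists s; split => //; split => // u uK su.
apply/eqP; rewrite eq_sym eqEcard su /=.
apply: smax; rewrite uK /=; exact: subset_trans su.
Qed.

Section Low.
Variable m : nat.
Local Notation N := m.+3.
Implicit Types (a b x : cube N) (F : {set cube N}).

Definition j0 : 'I_N := ord0.
Definition j1 : 'I_N := lift ord0 ord0.
Definition j2 : 'I_N := lift ord0 (lift ord0 ord0).

Definition agree a b := forall i : 'I_N, 3 <= i -> a i = b i.

Lemma hamming3 a b : agree a b ->
  hamming a b = (a j0 != b j0) + ((a j1 != b j1) + (a j2 != b j2)).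
Proof.
move=> ab; rewrite hamming_sum !big_ord_recl big1 ?addn0 //.
by move=> i _; rewrite ab ?eqxx //= !lift0.
Qed.

Definition flip3 x : cube N := [ffun i : 'I_N => if i < 3 then ~~ x i else x i].

Lemma flip3_agree x : agree x (flip3 x).
Proof. by move=> i; rewrite ffunE leqNgt => /negbTE ->. Qed.

Lemma ham_flip_self x : hamming x (flip3 x) = 3.
Proof.
rewrite hamming3; last exact: flip3_agree.
by rewrite !ffunE /=; case: (x j0); case: (x j1); case: (x j2).
Qed.

Lemma ham_flip x b : agree x b -> x != b -> hamming (flip3 x) b <= 2.
Proof.
move=> xb nxb.
have fb : agree (flip3 x) b by move=> i i3; rewrite -xb // -flip3_agree.
have h1 : 0 < hamming x b.
  by rewrite lt0n; apply/negP => /eqP /ham_eq0 E; rewrite E eqxx in nxb.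
move: h1; rewrite (hamming3 fb) (hamming3 xb) !ffunE /=.
by case: (x j0); case: (x j1); case: (x j2); case: (b j0); case: (b j1); case: (b j2).
Qed.

Lemma VRE t : (t \in VR N 2) = (t \in VR2 N).
Proof. by rewrite /VR2 -lock. Qed.

Definition fam F := [/\ 3 < #|F|, F \in VR N 2 & forall a b, a \in F -> b \in F -> agree a b].

Lemma fam_swap F x : fam F -> x \in F -> fam (flip3 x |: (F :\ x)).
Proof.
case=> F4 FV Fa xF; move: FV; rewrite VRE => /VRP FV.
have fx : flip3 x \notin F.
  apply/negP => fF; have := FV _ _ xF fF; by rewrite ham_flip_self.
have ag : forall a, a \in flip3 x |: (F :\ x) -> agree x a.
  move=> a; rewrite !inE => /orP [/eqP ->|/andP [_ aF]]; first exact: flip3_agree.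
  exact: Fa.
split.
- rewrite cardsU1 (cardsD1 x F) xF in F4 *.
  by rewrite !inE negb_and fx orbT.
- rewrite VRE; apply/VRP => a b.
  have hb : forall b, b \in F :\ x -> hamming (flip3 x) b <= 2.
    move=> c; rewrite !inE => /andP [cx cF]; apply: ham_flip; first exact: Fa.
    by rewrite eq_sym.
  rewrite !in_setU1 => /orP [/eqP ->|ain] /orP [/eqP ->|bin].
  + by rewrite hamming0.
  + exact: hb.
  + by rewrite hammingC; apply: hb.
  + apply: FV; [move: ain | move: bin]; rewrite !inE; case/andP => //.
- move=> a b aF bF i i3; rewrite -(ag a aF i i3); exact: ag.
Qed.

Lemma lower_ind d K : d_collapsible d K -> d <= 3 ->
  (forall t, t \in K -> t \in VR N 2) -> (forall F, fam F -> F \in K) ->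
  (exists F, fam F) -> False.
Proof.
elim=> [|K0 K1 Hstep _ IH] d3 KV Kf [F0 fF0].
  by move: (Kf _ fF0); rewrite inE.
case: Hstep => g [s [[gK gd [sK smax] gs guniq] HK1]]; subst K1.
apply: IH => //; last by exists F0.
  by move=> t; rewrite inE => /andP [/KV].
move=> F fF; rewrite inE (Kf _ fF) /=; apply/negP => /andP [gF Fs].
case: (fF) => F4 FV Fa.
have [x /andP [xg xF]] : exists x, (x \notin g) && (x \in F).
  case: (boolP [exists y, (y \notin g) && (y \in F)]) => [/existsP [y Hy]|]; first by exists y.
  rewrite negb_exists => /forallP H.
  have : F \subset g.
    by apply/subsetP => y yF; move: (H y); rewrite yF andbT negbK.
  move/subset_leq_card => Fg.
  by move: (leq_ltn_trans (leq_trans Fg gd) (leq_ltn_trans d3 F4)); rewrite ltnn.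
have fF2 := fam_swap fF xF.
have [s2 [ms2 F2s2]] := exists_maxface (Kf _ fF2).
have gF2 : g \subset flip3 x |: (F :\ x).
  apply/subsetP => y yg; rewrite !inE (subsetP gF _ yg) andbT orbC; apply/orP; left.
  by apply/negP => /eqP E; rewrite -E yg in xg.
have := guniq _ ms2 (subset_trans gF2 F2s2) => E; subst s2.
have fs : flip3 x \in s by apply: (subsetP F2s2); rewrite !inE eqxx.
have xs : x \in s by apply: (subsetP Fs).
move: (KV _ sK); rewrite VRE => /VRP /(_ _ _ xs fs).
by rewrite ham_flip_self.
Qed.

Definition zero : cube N := [ffun _ => false].
Definition ee (k : 'I_N) : cube N := [ffun i => i == k].
Definition F0 : {set cube N} := zero |: (ee j0 |: (ee j1 |: [set ee j2])).

Lemma neq_at a b k : a k != b k -> (a == b) = false.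
Proof. by move=> H; apply/negbTE; apply: contra H => /eqP ->. Qed.

Lemma F0_false a : a \in F0 -> forall i : 'I_N, 3 <= i -> a i = false.
Proof.
rewrite !inE => H i i3.
have ne : forall k : 'I_N, k < 3 -> (i == k) = false.
  by move=> k k3; apply/negbTE; apply/negP => /eqP E; move: i3; rewrite E leqNgt k3.
by case/or4P: H => /eqP ->; rewrite ffunE // ne.
Qed.

Lemma fam_F0 : fam F0.
Proof.
have a0 : forall a b, a \in F0 -> b \in F0 -> agree a b.
  by move=> a b aF bF i i3; rewrite (F0_false aF i3) (F0_false bF i3).
split => //.
- have e1 : (zero == ee j0) = false by apply: (@neq_at _ _ j0); rewrite !ffunE.
  have e2 : (zero == ee j1) = false by apply: (@neq_at _ _ j1); rewrite !ffunE.
  have e3 : (zero == ee j2) = false by apply: (@neq_at _ _ j2); rewrite !ffunE.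
  have e4 : (ee j0 == ee j1) = false by apply: (@neq_at _ _ j1); rewrite !ffunE.
  have e5 : (ee j0 == ee j2) = false by apply: (@neq_at _ _ j2); rewrite !ffunE.
  have e6 : (ee j1 == ee j2) = false by apply: (@neq_at _ _ j2); rewrite !ffunE.
  by rewrite /F0 !cardsU1 cards1 !inE e1 e2 e3 e4 e5 e6.
- rewrite VRE; apply/VRP => a b aF bF; rewrite hamming3; last exact: a0.
  by move: aF bF; rewrite !inE => /or4P [] /eqP -> /or4P [] /eqP ->; rewrite !ffunE.
Qed.
End Low.

Theorem theorem1p5 (n : nat) : 3 <= n -> collapsibility_number_is (VR n 2) 4.
Proof.
case: n => [|[|[|m]]] // _; split; first exact: upper.
move=> d d4 H; apply: (lower_ind H) => //.
- by move=> F [].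
- by exists (F0 m); exact: fam_F0.
Qed.
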